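(* Let $A$ be a vertex of finite height in a monotonous quiver $\mathcal O$. Then for every vertex $B$ of the clade $\mathcal O_A$ we have $\infty>h(B)\ge h(A)$ and $h_A(B)\ge h(B)-h(A)$, where $h$ and $h_A$ denote heights in $\mathcal O$ and in $\mathcal O_A$, respectively.
   Context: A quiver consists of a class of vertices and, for each ordered pair of vertices $(A,B)$, a set of edges $A\to B$ (loops and multiple edges allowed). An evolution of length $m\ge 0$ is a sequence $A_0\leftarrow A_1\leftarrow\cdots\leftarrow A_m$ of vertices together with edges $A_k\to A_{k-1}$ ($1\le k\le m$); $A_0$ is its initial and $A_m$ its terminal vertex. Write $A\le B$ ($A$ is an ancestor of $B$, $B$ a descendant of $A$) if there is an evolution with initial vertex $A$ and terminal vertex $B$; $A,B$ are isotypic if $A\le B$ and $B\le A$. A vertex $A$ is primitive if every ancestor of $A$ is isotypic to $A$. A full evolution for $X$ is an evolution with primitive initial vertex and terminal vertex $X$. The height of $X$ is the smallest length of a full evolution for $X$ ($\infty$ if none). A quiver is monotonous if $h(A)\ge h(B)$ for every edge $A\to B$. The clade $\mathcal O_A$ of a vertex $A$ is the quiver formed by all descendants of $A$ in $\mathcal O$ and all edges of $\mathcal O$ between them (primitivity and height in $\mathcal O_A$ are computed within $\mathcal O_A$). *)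

(* Defs.v *)
From Stdlib Require Import Arith ClassicalEpsilon.

Record Quiver := { V : Type ; E : V -> V -> Type }.

(* evol Q A B m : there is an evolution of length m with initial vertex A
   and terminal vertex B, i.e. A = A_0 <- A_1 <- ... <- A_m = B with
   edges A_k -> A_{k-1}. *)
Inductive evol (Q : Quiver) : V Q -> V Q -> nat -> Prop :=
| evol_nil : forall A, evol Q A A 0
| evol_cons : forall A B C m, evol Q A B m -> E Q C B -> evol Q A C (S m).

Definition anc (Q : Quiver) (A B : V Q) : Prop := exists m, evol Q A B m.

Definition isotypic (Q : Quiver) (A B : V Q) : Prop := anc Q A B /\ anc Q B A.

Definition primitive (Q : Quiver) (A : V Q) : Prop :=
  forall P, anc Q P A -> isotypic Q P A.

Definition full_evol_len (Q : Quiver) (X : V Q) (m : nat) : Prop :=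
  exists P, primitive Q P /\ evol Q P X m.

(* specification of the height: None encodes infinity *)
Definition height_spec (Q : Quiver) (X : V Q) (o : option nat) : Prop :=
  match o with
  | None => ~ exists m, full_evol_len Q X m
  | Some n => full_evol_len Q X n /\ forall m, full_evol_len Q X m -> n <= m
  end.

Definition height (Q : Quiver) (X : V Q) : option nat :=
  epsilon (inhabits None) (height_spec Q X).

Definition oge (x y : option nat) : Prop :=
  match x, y with
  | None, _ => True
  | Some _, None => False
  | Some a, Some b => b <= a
  end.

Definition monotonous (Q : Quiver) : Prop :=
  forall A B : V Q, E Q A B -> oge (height Q A) (height Q B).

Definition clade (Q : Quiver) (A : V Q) : Quiver :=
  {| V := { B : V Q | anc Q A B } ;
     E := fun x y => E Q (proj1_sig x) (proj1_sig y) |}.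

(* Main.v *)
Require Import Defs.
From Stdlib Require Import Arith.
From Stdlib Require Import Lia Classical ProofIrrelevance ClassicalEpsilon.

Lemma evol_app (Q : Quiver) A B C m k :
  evol Q A B m -> evol Q B C k -> evol Q A C (m + k).
Proof.
  intros H1 H2. induction H2.
  - rewrite Nat.add_0_r; exact H1.
  - rewrite Nat.add_succ_r. eapply evol_cons; eauto.
Qed.

Lemma min_exists (P : nat -> Prop) n : P n -> exists k, P k /\ forall m, P m -> k <= m.
Proof.
  intros Hn. apply NNPP; intro Hno.
  assert (forall n k, k <= n -> ~ P k).
  { induction n0; intros k Hk Pk.
    - apply Hno. exists k. split; [exact Pk|]. intros m _. lia.
    - destruct (Nat.eq_dec k (S n0)).
      + subst. apply Hno. exists (S n0). split; [exact Pk|].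
        intros m Pm. destruct (le_lt_dec (S n0) m); [exact l|].
        exfalso. apply (IHn0 m); [lia|exact Pm].
      + apply (IHn0 k); [lia|exact Pk]. }
  apply (H n n); auto.
Qed.

Lemma height_spec_ok (Q : Quiver) X : height_spec Q X (height Q X).
Proof.
  unfold height. apply epsilon_spec.
  destruct (classic (exists m, full_evol_len Q X m)) as [[m Hm]|Hn].
  - destruct (min_exists _ _ Hm) as [k [Hk Hmin]]. exists (Some k). simpl. auto.
  - exists None. simpl. exact Hn.
Qed.

Lemma height_finite (Q : Quiver) X m :
  full_evol_len Q X m -> exists n, height Q X = Some n /\ n <= m.
Proof.
  intros H. pose proof (height_spec_ok Q X) as S.
  destruct (height Q X) as [n|]; simpl in S.
  - exists n. split; [reflexivity|]. apply S, H.
  - exfalso. apply S. eauto.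
Qed.

Lemma height_some (Q : Quiver) X n : height Q X = Some n -> full_evol_len Q X n.
Proof.
  intros H. pose proof (height_spec_ok Q X) as S. rewrite H in S. apply S.
Qed.

Lemma oge_trans x y z : oge x y -> oge y z -> oge x z.
Proof. destruct x, y, z; simpl; intros; auto; lia. Qed.

Lemma mono_evol (Q : Quiver) X Y m :
  monotonous Q -> evol Q X Y m -> oge (height Q Y) (height Q X).
Proof.
  intros Hm H. induction H.
  - destruct (height Q A); simpl; auto.
  - eapply oge_trans; [apply Hm; eassumption|exact IHevol].
Qed.

Lemma lift_evol (Q : Quiver) (A : V Q) X Y m :
  evol Q X Y m -> forall (HX : anc Q A X) (HY : anc Q A Y),
  evol (clade Q A) (exist _ X HX) (exist _ Y HY) m.
Proof.
  intros H. induction H; intros HX HY.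
  - rewrite (proof_irrelevance _ HX HY). apply evol_nil.
  - rename A0 into A1. assert (HB : anc Q A B).
    { destruct HX as [j Hj]. exists (j + m). eapply evol_app; eauto. }
    apply (evol_cons (clade Q A) _ (exist _ B HB) _ m); [apply IHevol|assumption].
Qed.

Lemma proj_evol (Q : Quiver) (A : V Q) x y m :
  evol (clade Q A) x y m -> evol Q (proj1_sig x) (proj1_sig y) m.
Proof.
  intros H. induction H.
  - apply evol_nil.
  - eapply evol_cons; eauto.
Qed.

Theorem theorem9p3 (Q : Quiver) (A : V Q) (hA : nat) :
  monotonous Q ->
  height Q A = Some hA ->
  forall (B : V Q) (HB : anc Q A B),
    exists hB : nat,
      height Q B = Some hB /\ hA <= hB /\
      match height (clade Q A) (exist _ B HB) with
      | None => True
      | Some hAB => hB - hA <= hAB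
      end.
Proof.
  intros Hmono HhA B HB.
  pose proof (height_some _ _ _ HhA) as [P0 [HP0 HevA]].
  destruct HB as [k Hk] eqn:EHB.
  destruct (height_finite Q B (hA + k)) as [hB [HhB _]].
  { exists P0. split; [exact HP0|]. eapply evol_app; eauto. }
  exists hB. split; [exact HhB|].
  pose proof (mono_evol Q _ _ _ Hmono Hk) as Ho. rewrite HhA, HhB in Ho. simpl in Ho.
  split; [exact Ho|].
  rewrite <- EHB.
  destruct (height (clade Q A) (exist _ B HB)) as [hAB|] eqn:E; [|exact I].
  pose proof (height_some _ _ _ E) as [[P HP] [Hprim Hev]].
  assert (HAA : anc Q A A) by (exists 0; apply evol_nil).
  destruct HP as [j Hj] eqn:EHP.
  assert (Hanc : anc (clade Q A) (exist _ A HAA) (exist _ P HP)).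
  { exists j. apply lift_evol. exact Hj. }
  rewrite <- EHP in Hprim, Hev.
  destruct (Hprim _ Hanc) as [_ [i Hi]].
  apply proj_evol in Hi. simpl in Hi.
  destruct (height_finite Q P (hA + j)) as [hP [HhP _]].
  { exists P0. split; [exact HP0|]. eapply evol_app; eauto. }
  pose proof (mono_evol Q _ _ _ Hmono Hi) as Ho2. rewrite HhA, HhP in Ho2. simpl in Ho2.
  pose proof (height_some _ _ _ HhP) as [P1 [HP1 Hev1]].
  apply proj_evol in Hev. simpl in Hev.
  assert (full_evol_len Q B (hP + hAB)) as Hf.
  { exists P1. split; [exact HP1|]. eapply evol_app; eauto. }
  pose proof (height_spec_ok Q B) as S. rewrite HhB in S. simpl in S.
  apply S in Hf. lia.
Qed.
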